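(* For all positive integers $\ell$ and $n$, $\mathrm{IR}(K_{1,\ell}, K_{1,n}) = n+\ell$.
   Context: All graphs are finite and simple. $K_{1,m}$ denotes the star with $m$ edges. For graphs $F$, $H$, $G$, write $F \overset{\text{ind}}{\longrightarrow} (H,G)$ if for every coloring of the edges of $F$ with red and blue there is either a red induced copy of $H$ (a vertex set $S\subseteq V(F)$ with $F[S]\cong H$ and all edges of $F[S]$ red) or a blue induced copy of $G$ (defined analogously with blue). The induced Ramsey number $\mathrm{IR}(H,G)$ is the smallest number of vertices of a graph $F$ with $F \overset{\text{ind}}{\longrightarrow} (H,G)$. *)

(* Defs.v *)
From mathcomp Require Import all_boot.
Set Implicit Arguments. Unset Strict Implicit. Unset Printing Implicit Defensive.

Record sgraph := SGraph {
  vtx :> finType;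
  adj : rel vtx;
  adj_sym : symmetric adj;
  adj_irrefl : irreflexive adj }.

(* The star K_{1,m}: vertex 0 is the centre, adjacent to the m leaves 1..m. *)
Definition star_adj (m : nat) : rel 'I_m.+1 :=
  fun x y => ((val x == 0) && (val y != 0)) || ((val y == 0) && (val x != 0)).

Lemma star_adj_sym m : symmetric (star_adj (m:=m)).
Proof. by move=> x y; rewrite /star_adj orbC. Qed.

Lemma star_adj_irrefl m : irreflexive (star_adj (m:=m)).
Proof. by move=> x; rewrite /star_adj; case: (val x == 0). Qed.

Definition star (m : nat) : sgraph :=
  @SGraph 'I_m.+1 (@star_adj m) (@star_adj_sym m) (@star_adj_irrefl m).

(* A red/blue edge colouring of F: a symmetric function on pairs of vertices
   (only its values on edges matter); true = red, false = blue. *)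
Definition coloring (F : sgraph) := { c : F -> F -> bool | forall x y, c x y = c y x }.

Definition mono_induced_copy (H F : sgraph) (c : F -> F -> bool) (b : bool) : Prop :=
  exists f : H -> F,
    [/\ injective f,
        forall x y : H, adj (f x) (f y) = adj x y
      & forall x y : H, adj x y -> c (f x) (f y) = b].

Definition ind_arrows (F H G : sgraph) : Prop :=
  forall c : coloring F,
    mono_induced_copy H (sval c) true \/ mono_induced_copy G (sval c) false.

Definition IR_eq (H G : sgraph) (k : nat) : Prop :=
  (exists F : sgraph, #|F| = k /\ ind_arrows F H G) /\
  (forall F : sgraph, ind_arrows F H G -> k <= #|F|).

(* Main.v *)
Require Import Defs.
From mathcomp Require Import all_boot.
From Stdlib Require Import Classical_Prop.
From mathcomp Require Import zify.

Set Implicit Arguments. Unset Strict Implicit. Unset Printing Implicit Defensive.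

Section Key.
Variable F : sgraph.
Local Notation e := (@adj F).

Definition goodb (W : {set F}) (c : F -> F -> bool) (b : bool) (k : nat) :=
  forall v (S : {set F}), v \in W -> S \subset W -> k <= #|S| ->
   {in S, forall s, e v s && (c v s == b)} -> {in S &, forall s t, ~~ e s t} -> False.

Definition good W c l n := goodb W c true l /\ goodb W c false n.
Definition symc (c : F -> F -> bool) := forall x y, c x y = c y x.

Lemma goodb_neg (W : {set F}) c b k : goodb W c b k -> goodb W (fun x y => ~~ c x y) (~~ b) k.
Proof.
move=> H v S vW SW kS HS; apply: (H v S) => // s sS; have := HS s sS.
by rewrite (inj_eq negb_inj).
Qed.

Lemma good_swap (W : {set F}) c l n : good W c l n -> good W (fun x y => ~~ c x y) n l.
Proof. by case=> [g1 g2]; split; [exact: (goodb_neg g2)|exact: (goodb_neg g1)]. Qed.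

Lemma symc_neg c : symc c -> symc (fun x y => ~~ c x y).
Proof. by move=> h x y; rewrite h. Qed.

Definition IHtype (W : {set F}) := forall (W' : {set F}) l n, #|W'| < #|W| -> 0 < l -> 0 < n ->
   #|W'| < n + l -> exists c, symc c /\ good W' c l n.

Lemma step (W : {set F}) l n x : IHtype W ->
 1 < l -> 0 < n -> #|W| < n + l -> x \in W ->
 (forall S : {set F}, S \subset W -> l <= #|S| -> {in S, forall s, e x s} ->
    {in S &, forall s t, ~~ e s t} -> False) ->
 exists c, symc c /\ good W c l n.
Proof.
move=> IH l1 n0 Wsz xW Hx.
have cW := cardsD1 x W; rewrite xW in cW.
have szW' : #|W :\ x| < #|W| by lia.
have h1 : 0 < l.-1 by lia.
have h2 : #|W :\ x| < n + l.-1 by lia.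
have [c' [sc' [gr gb]]] := IH (W :\ x) l.-1 n szW' h1 n0 h2.
exists (fun u v => if (u == x) || (v == x) then true else c' u v); split.
  by move=> u v; rewrite orbC sc'.
split.
- move=> v S vW SW lS HS indS.
  case: (eqVneq v x) => [vx | vx].
    subst v; apply: (Hx S SW lS) => // s /HS /andP[].  done.
  apply: (gr v (S :\ x)).
  + by rewrite in_setD1 vx vW.
  + apply/subsetP => s; rewrite !in_setD1 => /andP[-> /(subsetP SW) ->] //.
  + have := cardsD1 x S; case: (x \in S) => /=; lia.
  + move=> s; rewrite in_setD1 => /andP[sx sS]; have := HS s sS.
    by rewrite (negbTE vx) (negbTE sx).
  + by move=> s t; rewrite !in_setD1 => /andP[_ sS] /andP[_ tS]; exact: indS.
- move=> v S vW SW nS HS indS.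
  have Hnx : forall s, s \in S -> (v != x) && (s != x).
    move=> s sS; have := HS s sS.
    by case: (v == x); case: (s == x); rewrite ?andbF.
  case: (set_0Vmem S) => [S0|[s0 s0S]].
    by move: nS; rewrite S0 cards0; lia.
  have /andP[vx _] := Hnx s0 s0S.
  apply: (gb v S) => //.
  + by rewrite in_setD1 vx vW.
  + apply/subsetP => s sS; rewrite in_setD1 (subsetP SW _ sS).
    by have /andP[_ ->] := Hnx s sS.
  + move=> s sS; have := HS s sS; have /andP[/negbTE -> /negbTE ->] := Hnx s sS.
    done.
Qed.

Lemma base1 (W : {set F}) n : 0 < n -> #|W| < n + 1 -> exists c, symc c /\ good W c 1 n.
Proof.
move=> n0 Wsz; exists (fun _ _ => false); split => //; split.
- move=> v S vW SW lS HS indS.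
  case: (set_0Vmem S) => [S0|[s0 s0S]].
    by move: lS; rewrite S0 cards0.
  by have := HS s0 s0S; rewrite andbF.
- move=> v S vW SW nS HS indS.
  have SW' : S \subset W :\ v.
    apply/subsetP => s sS; rewrite in_setD1 (subsetP SW _ sS) andbT.
    apply/eqP => sv; subst s; have := HS v sS; by rewrite adj_irrefl.
  have := subset_leq_card SW'; have := cardsD1 v W; rewrite vW; lia.
Qed.

Lemma body (W : {set F}) l n : IHtype W -> 0 < l -> 0 < n -> #|W| < n + l ->
  exists c, symc c /\ good W c l n.
Proof.
move=> IH l0 n0 Wsz.
case: (eqVneq l 1) => [l1 | l1]; first by subst l; exact: base1.
case: (eqVneq n 1) => [n1 | n1].
  subst n; have h : #|W| < l + 1 by lia.
  have [c [sc g]] := base1 l0 h.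
  by exists (fun x y => ~~ c x y); split; [exact: symc_neg | exact: good_swap].
have l2 : 1 < l by lia.
have n2 : 1 < n by lia.
case: (set_0Vmem W) => [W0|[x0 x0W]].
  by exists (fun _ _ => true); split => //; split => v S; rewrite W0 inE.
case: (classic (exists J : {set F}, [/\ J \subset W, n <= #|J|,
          {in J, forall s, e x0 s} & {in J &, forall s t, ~~ e s t}])).
- move=> [J [JW nJ adjJ indJ]].
  case: (set_0Vmem J) => [J0|[y yJ]].
    by move: nJ; rewrite J0 cards0; lia.
  apply: (step (x := y)) => //; first exact: (subsetP JW).
  move=> S SW lS adjS indS.
  have SWJ : S \subset W :\: J.
    apply/subsetP => s sS; rewrite inE (subsetP SW _ sS) andbT.
    apply/negP => sJ; have := indJ y s yJ sJ; by rewrite adjS.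
  have := subset_leq_card SWJ; rewrite cardsD (setIidPr JW); lia.
- move=> noJ.
  have IH' : IHtype W by [].
  have h : #|W| < l + n by lia.
  have hx : forall S : {set F}, S \subset W -> n <= #|S| -> {in S, forall s, e x0 s} ->
    {in S &, forall s t, ~~ e s t} -> False.
    move=> S SW nS adjS indS; apply: noJ; by exists S.
  have [c [sc g]] := step IH' n2 l0 h x0W hx.
  by exists (fun x y => ~~ c x y); split; [exact: symc_neg | exact: good_swap].
Qed.

Lemma key N : forall (W : {set F}) l n, #|W| <= N -> 0 < l -> 0 < n -> #|W| < n + l ->
  exists c, symc c /\ good W c l n.
Proof.
elim: N => [|N IHN] W l n hW.
  apply: body => W' l' n' h; lia.
apply: body => W' l' n' h; apply: IHN; lia.
Qed.

Lemma no_copy (c : F -> F -> bool) b k :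
  goodb setT c b k -> ~ mono_induced_copy (star k) c b.
Proof.
move=> g [f [finj fadj fcol]].
set L := [set i : 'I_k.+1 | val i != 0].
have LE : L = [set~ ord0] by apply/setP => i; rewrite !inE.
have cL : #|L| = k by rewrite LE cardsC1 card_ord.
apply: (g (f ord0) (f @: L)).
- by rewrite in_setT.
- exact: subsetT.
- by rewrite card_imset // cL.
- move=> s /imsetP[i iL ->]; rewrite fadj.
  have a : adj (ord0 : star k) i by rewrite inE in iL; rewrite /= /star_adj /= iL.
  by rewrite a (fcol _ _ a) eqxx.
- move=> s t /imsetP[i iL ->] /imsetP[j jL ->]; rewrite fadj /= /star_adj.
  by rewrite inE in iL; rewrite inE in jL; rewrite (negbTE iL) (negbTE jL).
Qed.

End Key.

Lemma star_copy m (c : star m -> star m -> bool) (csym : forall x y, c x y = c y x)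
  b k (S : {set 'I_m.+1}) :
  S \subset [set i : 'I_m.+1 | (val i != 0) && (c ord0 i == b)] -> k <= #|S| ->
  mono_induced_copy (star k) c b.
Proof.
move=> SP kS.
set s := enum S.
have ss : size s = #|S| by rewrite cardE.
pose f := fun i : 'I_k.+1 => if val i == 0 then (ord0 : 'I_m.+1) else nth ord0 s (val i).-1.
have fS : forall i : 'I_k.+1, val i != 0 -> f i \in S.
  move=> i i0; rewrite /f (negbTE i0) -mem_enum; apply: mem_nth.
  have hi : val i < k.+1 := ltn_ord i; rewrite ss; lia.
have fP : forall i : 'I_k.+1, val i != 0 -> (val (f i) != 0) && (c ord0 (f i) == b).
  by move=> i i0; have := subsetP SP _ (fS i i0); rewrite inE.
have fz : forall i : 'I_k.+1, (val (f i) == 0) = (val i == 0).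
  move=> i; case: (eqVneq (val i) 0) => [i0|i0].
    by rewrite /f i0.
  by have /andP[/negbTE -> _] := fP i i0.
have finj : injective f.
  move=> i j fij; apply/val_inj/eqP.
  have hi : val i < k.+1 := ltn_ord i.
  have hj : val j < k.+1 := ltn_ord j.
  case: (eqVneq (val i) 0) => [i0|i0]; case: (eqVneq (val j) 0) => [j0|j0].
  + by rewrite i0 j0.
  + by have := fz i; rewrite fij fz i0 (negbTE j0).
  + by have := fz i; rewrite fij fz j0 (negbTE i0).
  + move: fij; rewrite /f (negbTE i0) (negbTE j0) => /eqP.
    rewrite nth_uniq ?enum_uniq //.
      by move: i0 j0; rewrite -!lt0n => h1 h2 h3; apply/eqP; lia.
    * by rewrite ss; lia.
    * by rewrite ss; lia.
exists f; split.
- exact: finj.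
- by move=> x y; rewrite /= /star_adj !fz.
- move=> x y; rewrite /= /star_adj => /orP[] /andP[x0 y0].
  + have -> : f x = ord0 by rewrite /f x0.
    by have /andP[_ /eqP] := fP y y0.
  + have -> : f y = ord0 by rewrite /f x0.
    by rewrite csym; have /andP[_ /eqP] := fP x y0.
Qed.

Theorem lemma1 (l n : nat) : 0 < l -> 0 < n ->
  IR_eq (star l) (star n) (n + l).
Proof.
move=> l0 n0; split.
- exists (star (n + l).-1); split.
    by rewrite /= card_ord; lia.
  move=> [c csym] /=.
  set A := [set i : 'I_(n + l).-1.+1 | val i != 0].
  set P := [set i : 'I_(n + l).-1.+1 | c ord0 i].
  have AE : A = [set~ ord0] by apply/setP => i; rewrite !inE.
  have cA : #|A| = (n + l).-1 by rewrite AE cardsC1 card_ord.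
  have := cardsID P A; rewrite cA => h.
  case: (leqP l #|A :&: P|) => hl.
    left; apply: (star_copy csym (S := A :&: P)) => //.
    by apply/subsetP => i; rewrite !inE => /andP[-> ->].
  have h2 : n <= #|A :\: P| by lia.
  right; apply: (star_copy csym (S := A :\: P)); last exact: h2.
  by apply/subsetP => i; rewrite !inE => /andP[/negbTE -> ->].
- move=> F arr; rewrite leqNgt; apply/negP => lt.
  have h1 : #|[set: F]| <= #|F| by rewrite cardsT.
  have h2 : #|[set: F]| < n + l by rewrite cardsT.
  have [c [csym [g1 g2]]] := @key F #|F| setT l n h1 l0 n0 h2.
  case: (arr (exist _ c csym)) => /= H.
    exact: (no_copy g1 H).
  exact: (no_copy g2 H).
Qed.
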